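(* Let $M,N\in\mathbb{N}$ and let $\mathbf{M}(M,N)$ be the Motzkin shift. Let $G'$ be the directed graph with one vertex and $M+N+1$ loops named $\lambda_1,\rho_1,\dots,\rho_M,1_1,\dots,1_N$, and let $X_{G'}$ be its edge shift, so that $\mathcal{B}_n(X_{G'})$ is the set of all words of length $n$ over the alphabet $\{\lambda_1,\rho_1,\dots,\rho_M,1_1,\dots,1_N\}$. Then for every $n\geq 1$ there exists a bijection from the set $$\{x\in P_n(\mathbf{M}(M,N)) : \text{the multiplier of } x \text{ is positive, neutral, or equal to } \lambda_1^k \text{ for some } k\geq 1\}$$ onto $\mathcal{B}_n(X_{G'})$.
   Context: Alphabet $\Sigma=\{\lambda_1,\dots,\lambda_M,\rho_1,\dots,\rho_M,1_1,\dots,1_N\}$. $\mathcal{M}(M,N)$ is the monoid with zero generated by $\Sigma$ and an identity $\mathbf{1}$, subject only to the relations $\lambda_i\rho_i=\mathbf{1}$ ($1\le i\le M$), $\lambda_i\rho_j=0$ ($i\neq j$), $1_i\cdot\alpha=\alpha\cdot 1_i=\alpha$ for all $\alpha\in\Sigma\cup\{\mathbf 1\}$ (so $1_i1_j=\mathbf 1$), $\mathbf 1$ is the identity and $0$ is absorbing; no other relations are imposed (e.g. $\rho_i\lambda_j$ does not reduce). The map $\mathit{red}:\Sigma^*\to\mathcal{M}(M,N)$ sends a word $\alpha_1\cdots\alpha_n$ to the product $\alpha_1\cdot\ldots\cdot\alpha_n$ and the empty word to $\mathbf 1$. The Motzkin shift is $\mathbf{M}(M,N)=\{x\in\Sigma^{\mathbb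 Z}:\mathit{red}(x_ix_{i+1}\cdots x_j)\neq 0 \text{ for all } i\le j\}$ with the shift map $\sigma$. For a subshift $X$, $\mathcal B_n(X)$ is the set of words of length $n$ occurring in points of $X$, and $P_n(X)=\{x\in X:\sigma^n x=x\}$; each $x\in P_n(X)$ equals $\alpha^\infty$ for the block $\alpha=x_0\cdots x_{n-1}\in\mathcal B_n(X)$ (its $n$-periodic defining block). Let $\mathcal M^+$ be the (free) submonoid generated by $\rho_1,\dots,\rho_M$ and $\mathcal M^-$ the (free) submonoid generated by $\lambda_1,\dots,\lambda_M$. Every block $\alpha$ can be written $\alpha=\alpha_+\alpha_-$ with $\mathit{red}(\alpha_+)\in\mathcal M^+$ and $\mathit{red}(\alpha_-)\in\mathcal M^-$; the multiplier of $\alpha$ (and of $x=\alpha^\infty$) is $\mathit{red}(\alpha_-\alpha_+)$. It is called positive if it lies in $\mathcal M^+\setminus\{\mathbf 1\}$, negative if it lies in $\mathcal M^-\setminus\{\mathbf 1\}$, and neutral if it equals $\mathbf 1$. *)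

(* Defs.v *)
From mathcomp Require Import all_boot all_order all_algebra.
Set Implicit Arguments. Unset Strict Implicit. Unset Printing Implicit Defensive.
Import GRing.Theory Num.Theory.

(* The alphabet Sigma = {lambda_1..lambda_M, rho_1..rho_M, 1_1..1_N}
   (indices shifted to 0-based ordinals). *)
Inductive Sigma (M N : nat) : Type :=
| lam of 'I_M
| rho of 'I_M
| one of 'I_N.

(* Elements of the monoid with zero M(M,N), in normal form:
   None = 0 ;  Some (P, Lrev) = rho_{P_1} ... rho_{P_k} lambda_{l_1} ... lambda_{l_m}
   where Lrev = [:: l_m; ...; l_1] is the lambda part stored reversed.
   Every nonzero element has a unique such normal form (the relations
   lambda_i rho_i = 1, lambda_i rho_j = 0 (i<>j), 1_i = 1 form a
   confluent terminating rewriting system whose irreducible words are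
   rho-words followed by lambda-words). *)
Definition motz (M : nat) := option (seq 'I_M * seq 'I_M).

Definition motz_one (M : nat) : motz M := Some ([::], [::]).

Definition motz_step (M N : nat) (s : motz M) (a : Sigma M N) : motz M :=
  match s with
  | None => None
  | Some (P, L) =>
    match a with
    | one _ => Some (P, L)
    | lam i => Some (P, i :: L)
    | rho j =>
      match L with
      | [::] => Some (rcons P j, [::])
      | i :: L' => if i == j then Some (P, L') else None
      end
    end
  end.

Definition red (M N : nat) (w : seq (Sigma M N)) : motz M :=
  foldl (@motz_step M N) (motz_one M) w.

Definition in_Mplus (M : nat) (m : motz M) : Prop :=
  exists P, m = Some (P, [::]).
Definition in_Mminus (M : nat) (m : motz M) : Prop :=
  exists L, m = Some ([::], L).

Definition point (M N : nat) := int -> Sigma M N.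

Definition wordAt (M N : nat) (x : point M N) (i : int) (m : nat) : seq (Sigma M N) :=
  mkseq (fun k => x (i + (k%:Z))%R) m.

Definition inMotzkin (M N : nat) (x : point M N) : Prop :=
  forall (i : int) (m : nat), red (wordAt x i m.+1) <> None.

Definition shift (M N : nat) (x : point M N) : point M N :=
  fun i => x (i + 1)%R.

Definition periodicMotzkin (M N : nat) (n : nat) (x : point M N) : Prop :=
  inMotzkin x /\ iter n (@shift M N) x = x.

Definition is_multiplier (M N : nat) (alpha : seq (Sigma M N)) (m : motz M) : Prop :=
  exists ap am : seq (Sigma M N),
    [/\ alpha = ap ++ am, in_Mplus (red ap), in_Mminus (red am) &
        m = red (am ++ ap)].

Definition positive_elt (M : nat) (m : motz M) : Prop :=
  exists P, P <> [::] /\ m = Some (P, [::]).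
Definition neutral_elt (M : nat) (m : motz M) : Prop := m = motz_one M.
Definition lam_power (M : nat) (l1 : 'I_M) (m : motz M) : Prop :=
  exists k, (1 <= k)%N /\ m = Some ([::], nseq k l1).

Definition PerSet (M N n : nat) (l1 : 'I_M) : Type :=
  { x : point M N |
    periodicMotzkin n x /\
    exists m, is_multiplier (wordAt x 0 n) m /\
      (positive_elt m \/ neutral_elt m \/ lam_power l1 m) }.

Definition in_G'alph (M N : nat) (l1 : 'I_M) (a : Sigma M N) : bool :=
  match a with
  | lam i => i == l1
  | _ => true
  end.

Definition BnG' (M N n : nat) (l1 : 'I_M) : Type :=
  { w : seq (Sigma M N) | size w = n /\ all (@in_G'alph M N l1) w }.

(* Main.v *)
Require Import Defs.
From mathcomp Require Import all_boot all_order all_algebra.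
Set Implicit Arguments. Unset Strict Implicit. Unset Printing Implicit Defensive.

Fixpoint canc {M : nat} (L P : seq 'I_M) : option (seq 'I_M * seq 'I_M) :=
  match L, P with
  | i :: L', j :: P' => if i == j then canc L' P' else None
  | _, _ => Some (L, P)
  end.

Definition mul {M : nat} (x y : motz M) : motz M :=
  match x, y with
  | Some (P, L), Some (P', L') =>
      match canc L P' with
      | Some (L1, P1) => Some (P ++ P1, L' ++ L1)
      | None => None
      end
  | _, _ => None
  end.

Lemma canc_side {M} (L P L1 P1 : seq 'I_M) : canc L P = Some (L1, P1) -> L1 = [::] \/ P1 = [::].
Proof.
elim: L P => [|i L IH] [|j P] /=.
- by move=> [<- <-]; auto.
- by move=> [<- <-]; auto.
- by move=> [<- <-]; auto.
- by case: eqP => // _; apply: IH.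
Qed.

Lemma canc_rcons {M} (L P : seq 'I_M) j :
  canc L (rcons P j) = match canc L P with
    | Some ([::], P1) => Some ([::], rcons P1 j)
    | Some (i :: L1, P1) => if i == j then Some (L1, P1) else None
    | None => None end.
Proof.
elim: L P => [|i L IH] [|k P] //=.
- by case: L {IH}.
- by case: eqP => _ //; apply: IH.
Qed.

Lemma mul_step {M N} (x y : motz M) (a : Sigma M N) :
  motz_step (mul x y) a = mul x (motz_step y a).
Proof.
case: x => [[P L]|]; case: y => [[P' L']|] //=; case: a => [i|j|k] /=.
- by case: (canc L P') => [[L1 P1]|].
- case: L' => [|i L'] /=.
  + rewrite canc_rcons; case E: (canc L P') => [[[|i L1] P1]|] //=.
    * by rewrite rcons_cat.
    * have [|->] := canc_side E => //.
      by case: eqP => //; rewrite cats0.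
  + by case E: (canc L P') => [[L2 P2]|] /=; case: (i == j); rewrite ?E.
- by case: (canc L P') => [[L1 P1]|].
Qed.

Lemma foldl_None {M N} (v : seq (Sigma M N)) : foldl (@motz_step M N) None v = None.
Proof. by elim: v. Qed.

Lemma mul_one {M} (x : motz M) : mul x (motz_one M) = x.
Proof. by case: x => [[P L]|] //=; case: L => [|i L] /=; rewrite cats0. Qed.

Lemma one_mul {M} (x : motz M) : mul (motz_one M) x = x.
Proof. by case: x => [[P L]|] //=; rewrite cats0. Qed.

Lemma mulx0 {M} (x : motz M) : mul x None = None.
Proof. by case: x => [[]|]. Qed.

Lemma foldl_mul {M N} (x : motz M) (b : seq (Sigma M N)) :
  foldl (@motz_step M N) x b = mul x (red b).
Proof.
elim/last_ind: b => [|b a IH]; first by rewrite /= mul_one.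
by rewrite /red !foldl_rcons IH mul_step.
Qed.

Lemma red_cat {M N} (u v : seq (Sigma M N)) : red (u ++ v) = mul (red u) (red v).
Proof. by rewrite {1}/red foldl_cat foldl_mul. Qed.

Lemma red_prefix {M N} (u v : seq (Sigma M N)) : red (u ++ v) <> None -> red u <> None.
Proof. by rewrite red_cat => H E; apply: H; rewrite E. Qed.

Lemma red_infix {M N} (u v w : seq (Sigma M N)) : red (u ++ v ++ w) <> None -> red v <> None.
Proof. by rewrite red_cat => H E; apply: H; rewrite red_cat E /= mulx0. Qed.

Definition erase {M N} (l1 : 'I_M) (a : Sigma M N) : Sigma M N :=
  match a with lam _ => lam N l1 | _ => a end.
Definition rhos {M} N (s : seq 'I_M) : seq (Sigma M N) := map (rho N) s.

Fixpoint fill {M N} (l1 : 'I_M) (s : seq 'I_M) (w : seq (Sigma M N)) : seq (Sigma M N) :=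
  match w with
  | [::] => [::]
  | a :: w' =>
    let t := fill l1 s w' in
    (match a with
     | lam _ => lam N (match red (t ++ rhos N s) with Some (j :: _, _) => j | _ => l1 end)
     | _ => a end) :: t
  end.

Definition good {M N} (l1 : 'I_M) s (b : seq (Sigma M N)) :=
  exists Q k, red (b ++ rhos N s) = Some (Q, nseq k l1).

Lemma red_cons {M N} (a : Sigma M N) v : red (a :: v) = mul (red [:: a]) (red v).
Proof. exact: (red_cat [:: a] v). Qed.

Lemma red_rhos {M} N (P : seq 'I_M) : red (rhos N P) = Some (P, [::]).
Proof.
elim/last_ind: P => [|P j IH] //.
by rewrite /rhos map_rcons /red foldl_rcons -/(red _) -/(rhos N P) IH.
Qed.

Lemma nseq_rcons {T} k (x : T) : nseq k x ++ [:: x] = nseq k.+1 x.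
Proof. by elim: k => //= k ->. Qed.

Lemma fill_good {M N} (l1 : 'I_M) s (w : seq (Sigma M N)) : good l1 s (fill l1 s w).
Proof.
rewrite /good; elim: w => [|a w [Q [k IH]]] /=.
  by exists s, 0; rewrite red_rhos.
rewrite red_cons IH; case: a => [i|j|i] /=.
- case: Q IH => [|j Q] IH /=.
  + by exists [::], k.+1; rewrite nseq_rcons.
  + by rewrite eqxx; exists Q, k; rewrite ?cats0.
- by exists (j :: Q), k; rewrite ?cats0.
- by exists Q, k; rewrite ?cats0.
Qed.

Lemma good_fill {M N} (l1 : 'I_M) s (b : seq (Sigma M N)) : good l1 s b -> fill l1 s b = b.
Proof.
elim: b => [|a b IH] //= [Q [k]]; rewrite red_cons.
case E: (red (b ++ rhos N s)) => [[Q' L']|]; last by rewrite mulx0.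
case: a => [i|j|i] /=.
- case: Q' E => [|j Q'] E /=.
  + rewrite ?cats0 => -[_]; case: k => [|k]; first by move=> /(congr1 size); rewrite size_cat addn1.
    rewrite -nseq_rcons !cats1 => /rcons_inj [HL Hi].
    rewrite IH; last by exists [::], k; rewrite E HL.
    by rewrite E Hi.
  + case: eqP => [->|] // [_ HL]; rewrite ?cats0 in HL *.
    by rewrite IH ?E //; exists (j :: Q'), k; rewrite E HL.
- rewrite ?cats0 => -[_ HL]; rewrite IH //; by exists Q', k; rewrite E HL.
- rewrite ?cats0 => -[_ HL]; rewrite IH //; by exists Q', k; rewrite E HL.
Qed.

Lemma fill_erase {M N} (l1 : 'I_M) s (w : seq (Sigma M N)) :
  fill l1 s (map (erase l1) w) = fill l1 s w.
Proof. by elim: w => [|a w IH] //=; rewrite IH; case: a. Qed.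

Lemma erase_fill {M N} (l1 : 'I_M) s (w : seq (Sigma M N)) :
  map (erase l1) (fill l1 s w) = map (erase l1) w.
Proof. by elim: w => [|a w IH] //=; rewrite IH; case: a. Qed.

Lemma size_fill {M N} (l1 : 'I_M) s (w : seq (Sigma M N)) : size (fill l1 s w) = size w.
Proof. by elim: w => [|a w IH] //=; rewrite IH. Qed.

Definition pstep {M N} (st : seq 'I_M * nat) (a : Sigma M N) : seq 'I_M * nat :=
  match a with
  | lam _ => (st.1, st.2.+1)
  | rho j => if st.2 is c.+1 then (st.1, c) else (rcons st.1 j, 0)
  | _ => st
  end.

Definition pfold {M N} (v : seq (Sigma M N)) := foldl (@pstep M N) ([::], 0) v.

Lemma pfold_erase {M N} (l1 : 'I_M) (v : seq (Sigma M N)) st :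
  foldl (@pstep M N) st (map (erase l1) v) = foldl (@pstep M N) st v.
Proof. by elim: v st => [|a v IH] st //=; rewrite IH; case: a. Qed.

Lemma pfold_red_gen {M N} (v : seq (Sigma M N)) P L P' L' :
  foldl (@motz_step M N) (Some (P, L)) v = Some (P', L') ->
  foldl (@pstep M N) (P, size L) v = (P', size L').
Proof.
elim: v P L => [|a v IH] P L /=; first by move=> [-> ->].
case: a => [i|j|i] /=.
- by move/IH.
- case: L => [|i L] /=; first by move/IH.
  by case: eqP => _; [move/IH | rewrite foldl_None].
- by move/IH.
Qed.

Lemma pfold_red {M N} (v : seq (Sigma M N)) P L : red v = Some (P, L) -> (pfold v).1 = P.
Proof. by rewrite /red /pfold => /pfold_red_gen /= ->. Qed.

Lemma split_red {M N} (b : seq (Sigma M N)) P L : red b = Some (P, L) ->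
  exists ap am, [/\ b = ap ++ am, red ap = Some (P, [::]) & red am = Some ([::], L)].
Proof.
elim/last_ind: b P L => [|b a IH] P L.
  by move=> [<- <-]; exists [::], [::].
rewrite /red foldl_rcons -/(red b).
case E: (red b) => [[P0 L0]|] //.
have [ap [am [Hb Hap Ham]]] := IH _ _ E.
case: a => [i|j|i] /=.
- move=> [<- <-]; exists ap, (rcons am (lam N i)); split => //.
  + by rewrite Hb rcons_cat.
  + by rewrite /red foldl_rcons -/(red am) Ham.
- case: L0 E Ham => [|i L0] E Ham.
  + move=> [<- <-]; exists (rcons (ap ++ am) (rho N j)), [::]; split => //.
    * by rewrite cats0 Hb.
    * by rewrite -Hb foldl_rcons -/(red b) E.
  + case: eqP => // Hij [<- <-]; exists ap, (rcons am (rho N j)); split => //.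
    * by rewrite Hb rcons_cat.
    * by rewrite /red foldl_rcons -/(red am) Ham /= Hij eqxx.
- move=> [<- <-]; exists ap, (rcons am (Defs.one M i)); split => //.
  + by rewrite Hb rcons_cat.
  + by rewrite /red foldl_rcons -/(red am) Ham.
Qed.

Lemma canc_app {M} (L s X L1 P1 : seq 'I_M) : canc L s = Some (L1, P1) ->
  canc L (s ++ X) = canc L1 (P1 ++ X).
Proof.
elim: L s => [|i L IH] [|j s] /=.
- by move=> [<- <-].
- by move=> [<- <-].
- by move=> [<- <-].
- by case: eqP => // _; apply: IH.
Qed.

Lemma canc_nil {M} (L : seq 'I_M) : canc L [::] = Some (L, [::]).
Proof. by case: L. Qed.

Lemma canc0l {M} (P : seq 'I_M) : canc [::] P = Some ([::], P).
Proof. by case: P. Qed.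

Lemma good_pow {M N} (l1 : 'I_M) s L (b : seq (Sigma M N)) :
  good l1 s b -> red b = Some (s, L) ->
  forall k, red (flatten (nseq k b)) <> None.
Proof.
move=> [Q [k0 Hg]] Hb.
move: Hg; rewrite red_cat Hb red_rhos /=.
case Ec: (canc L s) => [[L1 P1]|] // _.
suff H : forall k, exists X K, red (flatten (nseq k b) ++ rhos N s) = Some (s ++ X, K)
   /\ (X = [::] \/ L1 = [::]).
  by move=> k; have [X [K [E _]]] := H k; apply: (@red_prefix _ _ _ (rhos N s)); rewrite E.
elim => [|k [X [K [E HX]]]].
  by exists [::], [::]; rewrite /= red_rhos cats0; split => //; left.
rewrite /= -catA red_cat E Hb /= (canc_app _ Ec).
have [->|HP1] := canc_side Ec.
  by exists (P1 ++ X), K; rewrite canc0l cats0; split; last right.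
case: HX => [HX|->]; last by exists (P1 ++ X), K; rewrite canc0l cats0; split; last right.
rewrite HX HP1 /= canc_nil; exists [::], (K ++ L1); rewrite cats0; split; last left.
by [].
by [].
Qed.

Lemma good_mult {M N} (l1 : 'I_M) s L (b : seq (Sigma M N)) :
  good l1 s b -> red b = Some (s, L) ->
  exists m, is_multiplier b m /\ (positive_elt m \/ neutral_elt m \/ lam_power l1 m).
Proof.
move=> [Q [k Hg]] Hb.
have [ap [am [Hs Hap Ham]]] := split_red Hb.
move: Hg; rewrite red_cat Hb red_rhos /=.
case Ec: (canc L s) => [[L1 P1]|] //= [_ HL1].
exists (Some (P1, L1)); split.
  exists ap, am; split => //; first by exists s.
  - by exists L.
  - by rewrite red_cat Ham Hap /= Ec.
case: k HL1 => [|k] /= HL1.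
  subst L1; case: P1 {Ec} => [|p P1]; first by right; left.
  by left; exists (p :: P1).
have [HL|->] := canc_side Ec; first by rewrite HL1 in HL.
by right; right; exists k.+1; rewrite HL1.
Qed.

Lemma mult_good {M N} (l1 : 'I_M) (b : seq (Sigma M N)) m :
  is_multiplier b m -> (positive_elt m \/ neutral_elt m \/ lam_power l1 m) ->
  exists P L, red b = Some (P, L) /\ good l1 P b.
Proof.
move=> [ap [am [-> [P HP] [L HL] ->]]] Hc.
have Hb : red (ap ++ am) = Some (P, L) by rewrite red_cat HP HL /= !cats0.
exists P, L; split => //.
have E : red ((ap ++ am) ++ rhos N P) = mul (Some (P, L)) (Some (P, [::])) by rewrite red_cat Hb red_rhos.
rewrite /good E; move: Hc; rewrite (red_cat am ap) HP HL /=.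
case: (canc L P) => [[L1 P1]|] /=.
- move=> [[P' [_ [_ ->]]]|[H|[k [_ [_ ->]]]]].
  + by exists (P ++ P1), 0.
  + by case: H => _ ->; exists (P ++ P1), 0.
  + by exists (P ++ P1), k.
- by move=> [[P' [_ //]]|[//|[k [_ //]]]].
Qed.

From mathcomp Require Import zify.
From Stdlib Require Import FunctionalExtensionality ProofIrrelevance.
Import GRing.Theory Num.Theory.

Definition ext {M N} (l1 : 'I_M) (n : nat) (b : seq (Sigma M N)) : point M N :=
  fun i => nth (lam N l1) b `|(i %% Posz n)%Z|%N.

Lemma iter_shift {M N} (x : point M N) k i : iter k (@shift M N) x i = x (i + k%:Z)%R.
Proof.
elim: k i => [|k IH] i /=; first by rewrite addr0.
by rewrite /shift IH; congr x; lia.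
Qed.

Lemma absz_mod (i : int) n : (0 < n)%N -> Posz `|(i %% Posz n)%Z|%N = (i %% Posz n)%Z.
Proof. by move=> hn; rewrite gez0_abs // modz_ge0 // eqz_nat -lt0n. Qed.

Lemma absz_mod_lt (i : int) n : (0 < n)%N -> (`|(i %% Posz n)%Z|%N < n)%N.
Proof.
move=> hn; have := ltz_pmod i (d := Posz n); rewrite ltz_nat => /(_ hn).
by rewrite -(absz_mod i hn) ltz_nat.
Qed.

Lemma nth_pow {T} (d : T) (b : seq T) K p : (p < K * size b)%N ->
  nth d (flatten (nseq K b)) p = nth d b (p %% size b).
Proof.
elim: K p => [|K IH] p; first by rewrite mul0n.
move=> Hp /=; rewrite nth_cat; case: ltnP => h; first by rewrite modn_small.
rewrite IH; last by rewrite mulSn in Hp; lia.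
by rewrite -{2}(subnK h) modnDr.
Qed.

Lemma size_pow {T} (b : seq T) K : size (flatten (nseq K b)) = K * size b.
Proof. by elim: K => //= K IH; rewrite size_cat IH mulSn. Qed.

Lemma window {M N} (l1 : 'I_M) (b : seq (Sigma M N)) i m :
  (0 < size b)%N ->
  let r := `|(i %% Posz (size b))%Z|%N in
  wordAt (ext l1 (size b) b) i m = take m (drop r (flatten (nseq (r + m) b))).
Proof.
move=> hn r.
have Hs : (r + m <= (r + m) * size b)%N by rewrite leq_pmulr.
apply: (@eq_from_nth _ (lam N l1)).
  rewrite /wordAt size_mkseq size_take size_drop size_pow.
  move: Hs; case: ifP => // /negbT; rewrite -leqNgt; move: ((r + m) * size b) => X; lia.
move=> t; rewrite /wordAt size_mkseq => Ht.
rewrite nth_mkseq // nth_take // nth_drop nth_pow; last by lia.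
rewrite /ext; congr nth.
apply/eqP; rewrite -eqz_nat absz_mod // -modz_nat PoszD /r absz_mod // modzDml //.
Qed.

Lemma ext_motzkin {M N} (l1 : 'I_M) s L (b : seq (Sigma M N)) :
  (0 < size b)%N -> good l1 s b -> red b = Some (s, L) -> inMotzkin (ext l1 (size b) b).
Proof.
move=> hn Hg Hb i m; rewrite window //.
set F := flatten _.
have HF := good_pow Hg Hb (k := `|(i %% Posz (size b))%Z|%N + m.+1).
rewrite -/F -(cat_take_drop `|(i %% Posz (size b))%Z|%N F) in HF.
rewrite -(cat_take_drop m.+1 (drop _ F)) in HF.
exact: red_infix HF.
Qed.

Lemma ext_per {M N} (l1 : 'I_M) (b : seq (Sigma M N)) :
  iter (size b) (@shift M N) (ext l1 (size b) b) = ext l1 (size b) b.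
Proof. by apply: functional_extensionality => i; rewrite iter_shift /ext modzDr. Qed.

Lemma word_ext {M N} (l1 : 'I_M) (b : seq (Sigma M N)) :
  wordAt (ext l1 (size b) b) 0 (size b) = b.
Proof.
apply: (@eq_from_nth _ (lam N l1)); rewrite size_mkseq // => t Ht.
by rewrite nth_mkseq // add0r /ext modz_nat absz_nat modn_small.
Qed.

Lemma per_ext {M N} (l1 : 'I_M) n (x : point M N) : (0 < n)%N ->
  iter n (@shift M N) x = x -> forall i, x i = ext l1 n (wordAt x 0 n) i.
Proof.
move=> hn H.
have H1 i : x (i + Posz n)%R = x i by rewrite -iter_shift H.
have Hk (k : nat) i : x (i + Posz (k * n))%R = x i.
  elim: k i => [|k IH] i; first by rewrite mul0n addr0.
  transitivity (x (i + Posz (k * n) + Posz n)%R); last by rewrite H1 IH.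
  by congr x; rewrite mulSn; lia.
move=> i.
rewrite /ext nth_mkseq ?absz_mod_lt // add0r absz_mod //.
have := divz_eq i (Posz n); case: (i %/ Posz n)%Z => k Ei.
  by rewrite -(Hk k (i %% Posz n)%Z); congr x; rewrite {1}Ei; nia.
rewrite -(Hk k.+1 i); congr x; move: Ei; rewrite NegzE; move: (i %% Posz n)%Z => r Ei; nia.
Qed.

Lemma erase_id {M N} (l1 : 'I_M) (w : seq (Sigma M N)) : all (in_G'alph l1) w -> map (erase l1) w = w.
Proof. by elim: w => [|a w IH] //= /andP[Ha /IH ->]; case: a Ha => //= i /eqP ->. Qed.

Lemma fill_red {M N} (l1 : 'I_M) (w : seq (Sigma M N)) :
  let s := (pfold w).1 in exists L, red (fill l1 s w) = Some (s, L).
Proof.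
move=> s.
have Hg := fill_good l1 s w.
have : red (fill l1 s w) <> None.
  by case: Hg => Q [k E]; apply: (@red_prefix _ _ _ (rhos N s)); rewrite E.
case E: (red (fill l1 s w)) => [[P L]|] // _; exists L.
have := pfold_red E; rewrite /pfold -(pfold_erase l1) erase_fill pfold_erase => HP.
by rewrite -HP.
Qed.

Theorem proposition2p1 (M N : nat) (hM : (0 < M)%N) (n : nat) (hn : (1 <= n)%N) :
  exists f : PerSet N n (Ordinal hM) -> BnG' N n (Ordinal hM), bijective f.
Proof.
set l1 := Ordinal hM.
have fP (x : PerSet N n l1) :
    size (map (erase l1) (wordAt (sval x) 0 n)) = n /\ all (in_G'alph l1) (map (erase l1) (wordAt (sval x) 0 n)).
  split; first by rewrite size_map /wordAt size_mkseq.
  rewrite all_map; elim: (wordAt _ _ _) => [|a v IH] //=; rewrite IH andbT.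
  by case: a => //= i; rewrite eqxx.
have gP (w : BnG' N n l1) :
    let b := fill l1 (pfold (sval w)).1 (sval w) in
    periodicMotzkin n (ext l1 n b) /\
    exists m, is_multiplier (wordAt (ext l1 n b) 0 n) m /\
      (positive_elt m \/ neutral_elt m \/ lam_power l1 m).
  move=> b.
  have Hs : size b = n by rewrite /b size_fill; case: (svalP w).
  have [L HL] := fill_red l1 (sval w).
  have Hg := fill_good l1 (pfold (sval w)).1 (sval w).
  rewrite -Hs; split; first split.
  - by apply: (ext_motzkin _ Hg HL); rewrite Hs.
  - exact: ext_per.
  - by rewrite word_ext; apply: (good_mult Hg HL).
exists (fun x => exist (fun w => size w = n /\ all (in_G'alph l1) w) _ (fP x)).
exists (fun w => exist (fun x => periodicMotzkin n x /\ exists m, is_multiplier (wordAt x 0 n) m /\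
      (positive_elt m \/ neutral_elt m \/ lam_power l1 m)) _ (gP w)).
- move=> [x [[Hm Hper] [m [Hmul Hc]]]] /=.
  apply: subset_eq_compat.
  have [P [L [Hr Hg]]] := mult_good Hmul Hc.
  have -> : (pfold (map (erase l1) (wordAt x 0 n))).1 = P.
    by rewrite /pfold pfold_erase (pfold_red Hr).
  rewrite fill_erase good_fill //.
  by apply: functional_extensionality => i; rewrite -per_ext.
- move=> [w [Hs Ha]] /=.
  apply: subset_eq_compat.
  have Hs' : size (fill l1 (pfold w).1 w) = n by rewrite size_fill.
  have := word_ext l1 (fill l1 (pfold w).1 w); rewrite Hs' => ->.
  by rewrite erase_fill erase_id.
Qed.
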